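(* Let $h$ be a bilinear form on $V$, $\bar h=\mathcal T(h)$ the associated endomorphism of $V$ (so $\langle\bar h(v),w\rangle=h(v,w)$), and $\widehat h$ the unique exterior algebra endomorphism of $\Lambda V$ extending $\bar h$ with $\widehat h(1)=1$, i.e. $\widehat h(v_1\wedge\cdots\wedge v_p)=\bar h(v_1)\wedge\cdots\wedge\bar h(v_p)$. Then $$\mathcal T(e^h)=\mathcal T\Big(\sum_{p\geq0}\frac{h^p}{p!}\Big)=\widehat h,$$ where $h^0=1$ and $h^p=0$ for $p>n$. In particular $\mathcal T\big(\frac{g^p}{p!}\big)=\mathrm{Id}_{\Lambda^pV}$.
   Context: $(V,g)$ is a Euclidean real vector space of dimension $n$, identified with $V^*$ via $g$. Double forms are elements of $\bigoplus_{p,q}\Lambda^pV^*\otimes\Lambda^qV^*$, a $(p,q)$ double form being viewed as a bilinear form on $\Lambda^pV\times\Lambda^qV$; bilinear forms on $V$ are $(1,1)$ double forms, and $g$ itself is one. Exterior product: $(\theta_1\otimes\theta_2)(\theta_3\otimes\theta_4)=(\theta_1\wedge\theta_3)\otimes(\theta_2\wedge\theta_4)$, extended bilinearly; $h^p$ is the $p$-th power for it. $\Lambda V$ carries the inner product induced by $g$. The linear isomorphism $\mathcal T$ from double forms to $L(\Lambda V,\Lambda V)$ is $\mathcal T(\omega_1\otimes\omega_2)(\theta)=\langle\omega_1^\sharp,\theta\rangle\omega_2^\sharp$, where $\omega^\sharp$ is the exterior vector dual to the form $\omega$; equivalently $\langle\mathcal T(\omega)u_1,u_2\rangle=\omega(u_1,u_2)$.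 *)

(* Defs.v *)
(* V = R^n with its standard (orthonormal) basis e_0..e_{n-1}. *)
From HB Require Import structures.
From mathcomp Require Import all_boot all_order all_algebra.
From mathcomp Require Import reals.
Set Implicit Arguments. Unset Strict Implicit. Unset Printing Implicit Defensive.
Import Order.TTheory GRing.Theory Num.Theory.
Local Open Scope ring_scope.

Section DoubleForms.
Variables (R : realType) (n : nat).

(* Exterior algebra Lambda V: coordinates in the orthonormal basis
   e_S = e_{i1} /\ ... /\ e_{ip}  (S = {i1 < ... < ip}). *)
Definition ext := {ffun {set 'I_n} -> R}.

(* Double forms: omega(S,T) = omega(e_S, e_T), i.e.
   omega = sum_{S,T} omega(S,T) e_S^* (x) e_T^*. *)
Definition dform := {ffun {set 'I_n} * {set 'I_n} -> R}.

Definition ebasis (S : {set 'I_n}) : ext := [ffun T => (T == S)%:R].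
Definition eone : ext := ebasis set0.

Definition eadd (u v : ext) : ext := [ffun S => u S + v S].
Definition escale (a : R) (u : ext) : ext := [ffun S => a * u S].

(* sign of e_S /\ e_T = sign * e_{S u T} for disjoint S, T *)
Definition wsign (S T : {set 'I_n}) : R :=
  (-1) ^+ #|[set ij : 'I_n * 'I_n | [&& ij.1 \in S, ij.2 \in T & (ij.2 < ij.1)%N]]|.

Definition wcoef (S T A : {set 'I_n}) : R :=
  if [disjoint S & T] && (S :|: T == A) then wsign S T else 0.

Definition wedge (u v : ext) : ext :=
  [ffun A => \sum_(S : {set 'I_n}) \sum_(T : {set 'I_n}) u S * v T * wcoef S T A].

Definition vec (v : 'I_n -> R) : ext :=
  [ffun S => \sum_(i : 'I_n) v i * (S == [set i])%:R].

Definition homog (p : nat) (u : ext) : Prop := forall S : {set 'I_n}, #|S| != p -> u S = 0.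

(* exterior product of double forms:
   (t1 (x) t2)(t3 (x) t4) = (t1 /\ t3) (x) (t2 /\ t4), extended bilinearly *)
Definition dprod (w e : dform) : dform :=
  [ffun AB : {set 'I_n} * {set 'I_n} =>
     \sum_(S : {set 'I_n}) \sum_(S' : {set 'I_n}) \sum_(T : {set 'I_n}) \sum_(T' : {set 'I_n})
       w (S, T) * e (S', T') * wcoef S S' AB.1 * wcoef T T' AB.2].

Definition done : dform := [ffun AB => ((AB.1 == set0) && (AB.2 == set0))%:R].

Definition dpow (w : dform) (p : nat) : dform := iter p (dprod w) done.

Definition dadd (w e : dform) : dform := [ffun AB => w AB + e AB].
Definition dscale (a : R) (w : dform) : dform := [ffun AB => a * w AB].
Definition dzero : dform := [ffun _ => 0].

(* bilinear form h on V (matrix h i j = h(e_i,e_j)) seen as a (1,1) double form *)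
Definition dform_of_bil (h : 'M[R]_n) : dform :=
  [ffun AB => \sum_(i : 'I_n) \sum_(j : 'I_n)
                 h i j * ((AB.1 == [set i]) && (AB.2 == [set j]))%:R].

Definition gmetric : 'M[R]_n := 1%:M.

Definition dexp_trunc (w : dform) (N : nat) : dform :=
  \big[dadd/dzero]_(p < N) dscale (p`!%:R)^-1 (dpow w p).

(* T : double forms -> L(Lambda V, Lambda V), <T(w) u1, u2> = w(u1, u2) *)
Definition Tmap (w : dform) (u : ext) : ext :=
  [ffun B => \sum_(A : {set 'I_n}) u A * w (A, B)].

(* hbar = T(h) restricted to V: <hbar v, w> = h(v, w) *)
Definition hbar (h : 'M[R]_n) (v : 'I_n -> R) : 'I_n -> R :=
  fun j => \sum_(i : 'I_n) v i * h i j.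

End DoubleForms.

(* Main.v *)
Require Import Defs.
From HB Require Import structures.
From mathcomp Require Import all_boot all_order all_algebra.
From mathcomp Require Import reals.
From mathcomp Require Import ring lra.
Set Implicit Arguments. Unset Strict Implicit. Unset Printing Implicit Defensive.
Import Order.TTheory GRing.Theory Num.Theory.
Local Open Scope ring_scope.

Section Ext.
Variables (R : realType) (n : nat).
Notation E := {ffun {set 'I_n} -> R}.
Implicit Types (S T U A B : {set 'I_n}).

Definition pairs S T := [set ij : 'I_n * 'I_n | [&& ij.1 \in S, ij.2 \in T & (ij.2 < ij.1)%N]].

Lemma wsignE S T : wsign R S T = (-1) ^+ #|pairs S T|.
Proof. by []. Qed.

Lemma wsign_sq S T : wsign R S T * wsign R S T = 1.
Proof. by rewrite wsignE -exprD addnn -mul2n exprM sqrrN !expr1n. Qed.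

Lemma wsignUl S1 S2 T : [disjoint S1 & S2] ->
  wsign R (S1 :|: S2) T = wsign R S1 T * wsign R S2 T.
Proof.
move=> d; rewrite !wsignE -exprD; congr (_ ^+ _).
have -> : pairs (S1 :|: S2) T = pairs S1 T :|: pairs S2 T.
  by apply/setP => -[i j]; rewrite !inE /= andb_orl.
rewrite cardsU.
have -> : #|pairs S1 T :&: pairs S2 T| = 0%N.
  apply/eqP; rewrite cards_eq0; apply/eqP/setP => -[i j]; rewrite !inE /=.
  case: (boolP (i \in S1)) => iS1 /=; last by [].
  by rewrite (disjointFr d iS1) /= andbF.
by rewrite ssrnat.subn0.
Qed.

Lemma wsignUr S T1 T2 : [disjoint T1 & T2] ->
  wsign R S (T1 :|: T2) = wsign R S T1 * wsign R S T2.
Proof.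
move=> d; rewrite !wsignE -exprD; congr (_ ^+ _).
have -> : pairs S (T1 :|: T2) = pairs S T1 :|: pairs S T2.
  apply/setP => -[i j]; rewrite !inE /=.
  by case: (i \in S); case: (j \in T1); case: (j \in T2); case: (j < i)%N.
rewrite cardsU.
have -> : #|pairs S T1 :&: pairs S T2| = 0%N.
  apply/eqP; rewrite cards_eq0; apply/eqP/setP => -[i j]; rewrite !inE /=.
  case: (boolP (j \in T1)) => jT1; last by rewrite !andbF.
  by rewrite (disjointFr d jT1) !andbF.
by rewrite ssrnat.subn0.
Qed.

Lemma wsign_lt S T : (forall a b, a \in S -> b \in T -> (a < b)%N) -> wsign R S T = 1.
Proof.
move=> H; rewrite wsignE.
have -> : pairs S T = set0.
  apply/setP => -[i j]; rewrite !inE /=.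
  apply/negP => /and3P [iS jT lt]; have := H _ _ iS jT.
  by rewrite ltnNge (ltnW lt).
by rewrite cards0 expr0.
Qed.

Lemma wsign11 (i k : 'I_n) : wsign R [set i] [set k] = if (k < i)%N then -1 else 1.
Proof.
rewrite wsignE; case: ifP => lt.
  have -> : pairs [set i] [set k] = [set (i, k)].
    apply/setP => -[a b]; rewrite !inE /= xpair_eqE.
    by case: eqP => [->|] //=; case: eqP => [->|] //=; rewrite lt.
  by rewrite cards1 expr1.
have -> : pairs [set i] [set k] = set0.
  apply/setP => -[a b]; rewrite !inE /=.
  by case: eqP => [->|] //=; case: eqP => [->|] //=; rewrite lt.
by rewrite cards0 expr0.
Qed.

Lemma wedgeE (u v : E) A : wedge u v A = \sum_S \sum_T u S * v T * wcoef R S T A.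
Proof. by rewrite ffunE. Qed.

Lemma sum_wcoef S T (g : {set 'I_n} -> R) :
  \sum_A wcoef R S T A * g A = if [disjoint S & T] then wsign R S T * g (S :|: T) else 0.
Proof.
rewrite /wcoef; case: ifP => d.
  rewrite (bigD1 (S :|: T)) //= eqxx big1 ?addr0 // => A /negbTE.
  by rewrite eq_sym => ->; rewrite mul0r.
by apply: big1 => A _; rewrite mul0r.
Qed.

Lemma wcoef_assoc S T U B :
  \sum_A wcoef R S T A * wcoef R A U B = \sum_A wcoef R T U A * wcoef R S A B.
Proof.
rewrite sum_wcoef.
rewrite sum_wcoef /wcoef.
have dU (X Y Z : {set 'I_n}) : [disjoint X :|: Y & Z] = [disjoint X & Z] && [disjoint Y & Z].
  by rewrite -!setI_eq0 setIUl setU_eq0.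
have dU' (X Y Z : {set 'I_n}) : [disjoint X & Y :|: Z] = [disjoint X & Y] && [disjoint X & Z].
  by rewrite -!setI_eq0 setIUr setU_eq0.
rewrite dU dU' setUA.
case: (boolP [disjoint S & T]) => dST; case: (boolP [disjoint T & U]) => dTU;
  case: (boolP [disjoint S & U]) => dSU; rewrite /= ?mulr0 //.
case: eqP => _ //; last by rewrite !mulr0.
by rewrite wsignUl // wsignUr // ; ring.
Qed.

Lemma reorder4 (f : {set 'I_n} -> {set 'I_n} -> {set 'I_n} -> {set 'I_n} -> R) :
  \sum_A \sum_U \sum_S \sum_T f A U S T = \sum_S \sum_T \sum_U \sum_A f A U S T.
Proof.
rewrite exchange_big /=.
under eq_bigr => U _ do rewrite exchange_big /=.
under eq_bigr => U _ do under eq_bigr => S _ do rewrite exchange_big /=.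
rewrite exchange_big /=.
by under eq_bigr => S _ do rewrite exchange_big /=.
Qed.

Lemma reorder3 (f : {set 'I_n} -> {set 'I_n} -> {set 'I_n} -> R) :
  \sum_A \sum_T \sum_U f A T U = \sum_T \sum_U \sum_A f A T U.
Proof.
rewrite exchange_big /=.
by under eq_bigr => T _ do rewrite exchange_big /=.
Qed.

Lemma wedgeA (u v w : E) : wedge (wedge u v) w = wedge u (wedge v w).
Proof.
apply/ffunP => B; rewrite !wedgeE.
transitivity (\sum_S \sum_T \sum_U u S * v T * w U * (\sum_A wcoef R S T A * wcoef R A U B)).
  transitivity (\sum_A \sum_U \sum_S \sum_T u S * v T * w U * (wcoef R S T A * wcoef R A U B)).
    apply: eq_bigr => A _; apply: eq_bigr => U _; rewrite wedgeE -mulrA big_distrl.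
    apply: eq_bigr => S _; rewrite big_distrl; apply: eq_bigr => T _ /=; ring.
  rewrite reorder4; apply: eq_bigr => S _; apply: eq_bigr => T _; apply: eq_bigr => U _.
  by rewrite mulr_sumr.
apply: eq_bigr => S _.
transitivity (\sum_A \sum_T \sum_U u S * v T * w U * (wcoef R T U A * wcoef R S A B)).
  rewrite reorder3; apply: eq_bigr => T _; apply: eq_bigr => U _.
  by rewrite wcoef_assoc mulr_sumr.
apply: eq_bigr => A _; rewrite wedgeE [RHS]mulrAC big_distrr /=.
apply: eq_bigr => T _; rewrite big_distrr /=.
apply: eq_bigr => U _ /=; ring.
Qed.


Lemma escaleE a (u : E) S : escale a u S = a * u S.
Proof. by rewrite ffunE. Qed.

Lemma escale1 (u : E) : escale 1 u = u.
Proof. by apply/ffunP => S; rewrite ffunE mul1r. Qed.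

Lemma escaleA a b (u : E) : escale a (escale b u) = escale (a * b) u.
Proof. by apply/ffunP => S; rewrite !ffunE mulrA. Qed.

Lemma escale0 a : escale a (0 : E) = 0.
Proof. by apply/ffunP => S; rewrite !ffunE mulr0. Qed.

Lemma wedgeZl a (u v : E) : wedge (escale a u) v = escale a (wedge u v).
Proof.
apply/ffunP => A; rewrite escaleE !wedgeE mulr_sumr; apply: eq_bigr => S _.
rewrite mulr_sumr; apply: eq_bigr => T _; rewrite escaleE; ring.
Qed.

Lemma wedgeZr a (u v : E) : wedge u (escale a v) = escale a (wedge u v).
Proof.
apply/ffunP => A; rewrite escaleE !wedgeE mulr_sumr; apply: eq_bigr => S _.
rewrite mulr_sumr; apply: eq_bigr => T _; rewrite escaleE; ring.
Qed.

Lemma wedgeDl (u1 u2 v : E) : wedge (u1 + u2) v = wedge u1 v + wedge u2 v :> E.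
Proof.
apply/ffunP => A; rewrite !ffunE -big_split; apply: eq_bigr => S _.
rewrite -big_split; apply: eq_bigr => T _ /=; rewrite !ffunE; ring.
Qed.

Lemma wedgeDr (u v1 v2 : E) : wedge u (v1 + v2) = wedge u v1 + wedge u v2 :> E.
Proof.
apply/ffunP => A; rewrite !ffunE -big_split; apply: eq_bigr => S _.
rewrite -big_split; apply: eq_bigr => T _ /=; rewrite !ffunE; ring.
Qed.

Lemma wedge0l (v : E) : wedge 0 v = 0 :> E.
Proof. by apply/ffunP => A; rewrite !ffunE big1 // => S _; rewrite big1 // => T _; rewrite ffunE !mul0r. Qed.

Lemma wedge0r (v : E) : wedge v 0 = 0 :> E.
Proof. by apply/ffunP => A; rewrite !ffunE big1 // => S _; rewrite big1 // => T _; rewrite ffunE mulr0 !mul0r. Qed.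

Lemma wedgeNl (u v : E) : wedge (- u) v = - wedge u v :> E.
Proof.
apply/ffunP => A; rewrite !ffunE -sumrN; apply: eq_bigr => S _.
rewrite -sumrN; apply: eq_bigr => T _ /=; rewrite !ffunE; ring.
Qed.

Definition isvec (x : E) := forall S, #|S| != 1%N -> x S = 0.

Lemma wcoef_anti S T A : #|S| = 1%N -> #|T| = 1%N -> wcoef R S T A = - wcoef R T S A.
Proof.
move=> /eqP/cards1P [i ->] /eqP/cards1P [k ->]; rewrite /wcoef !disjoints1 !inE setUC eq_sym.
case: (eqVneq i k) => [->|ik] /=; first by rewrite oppr0.
case: ifP => _; last by rewrite oppr0.
rewrite !wsign11; case: ltngtP => //; last by move=> /val_inj e; rewrite e eqxx in ik.
  by move=> _; rewrite opprK.
Qed.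

Lemma wedge_anti (x y : E) : isvec x -> isvec y -> wedge x y = - wedge y x :> E.
Proof.
move=> vx vy; apply/ffunP => A; rewrite !ffunE [in RHS]exchange_big -sumrN /=; apply: eq_bigr => S _.
rewrite -sumrN; apply: eq_bigr => T _ /=.
case: (eqVneq #|S| 1%N) => hS; last by rewrite vx //; ring.
case: (eqVneq #|T| 1%N) => hT; last by rewrite vy //; ring.
rewrite (wcoef_anti A hS hT); ring.
Qed.

Lemma wedge_vv (x : E) : isvec x -> wedge x x = 0 :> E.
Proof.
move=> vx; have H := wedge_anti vx vx; apply/ffunP => A.
have := congr1 (fun f : E => f A) H; rewrite !ffunE => H'.
lra.
Qed.

Lemma wedge_lanti (x y Z : E) : isvec x -> isvec y ->
  wedge x (wedge y Z) = - wedge y (wedge x Z) :> E.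
Proof. by move=> vx vy; rewrite -!wedgeA (wedge_anti vx vy) wedgeNl. Qed.

Lemma wedge_xxZ (x Z : E) : isvec x -> wedge x (wedge x Z) = 0 :> E.
Proof. by move=> vx; rewrite -wedgeA wedge_vv // wedge0l. Qed.

Lemma wsign0l T : wsign R set0 T = 1.
Proof. by apply: wsign_lt => a b; rewrite inE. Qed.

Lemma wedge1l (u : E) : wedge (eone R n) u = u.
Proof.
apply/ffunP => A; rewrite wedgeE (bigD1 set0) //= [X in _ + X]big1 ?addr0.
  rewrite (bigD1 A) //= [X in _ + X]big1 ?addr0.
    by rewrite !ffunE eqxx /wcoef -setI_eq0 set0I eqxx /= set0U eqxx wsign0l; ring.
  move=> T /negbTE TA; rewrite /wcoef set0U TA andbF; ring.
move=> S /negbTE S0; apply: big1 => T _; by rewrite !ffunE S0 !mul0r.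
Qed.

End Ext.

Section Hat.
Variables (R : realType) (n : nat) (h : 'M[R]_n).
Notation E := {ffun {set 'I_n} -> R}.
Implicit Types (S T U A B : {set 'I_n}).

Definition hd := dform_of_bil h.
Definition phi (i : 'I_n) : E := Tmap hd (ebasis R [set i]).

Lemma phiE i B : phi i B = \sum_j h i j * (B == [set j])%:R.
Proof.
rewrite /phi /Tmap ffunE (bigD1 [set i]) //= [X in _ + X]big1 ?addr0.
  rewrite !ffunE eqxx mul1r (bigD1 i) //= [X in _ + X]big1 ?addr0.
    by apply: eq_bigr => j _ /=; rewrite eqxx.
  move=> k /negbTE ki; apply: big1 => j _ /=.
  by rewrite (inj_eq set1_inj) eq_sym ki /= mulr0.
by move=> S /negbTE SI; rewrite !ffunE SI mul0r.
Qed.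

Lemma phi_vec i : isvec (phi i).
Proof.
move=> B hB; rewrite phiE big1 // => j _.
have -> : (B == [set j]) = false by apply/negbTE; apply: contra hB => /eqP ->; rewrite cards1.
by rewrite mulr0.
Qed.

Definition hh (s : seq 'I_n) A : E :=
  foldr (fun i acc => if i \in A then wedge (phi i) acc else acc) (eone R n) s.

Lemma hh_eq s A B : (forall x, x \in s -> (x \in A) = (x \in B)) -> hh s A = hh s B.
Proof.
elim: s => //= k s IH H; rewrite H ?mem_head // IH // => x xs.
by apply: H; rewrite inE xs orbT.
Qed.

Definition ltord : rel 'I_n := fun a b => (a < b)%N.

Lemma hhL s : sorted ltord s -> forall i U, i \in s -> {subset U <= s} ->
  wedge (phi i) (hh s U) =
    if i \in U then 0 else escale (wsign R [set i] U) (hh s (i |: U)).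
Proof.
elim: s => [//|k s IH] srt i U.
have srt' : sorted ltord s := path_sorted srt.
have allk : all (ltord k) s.
  by apply: (order_path_min _ srt) => y x z; apply: ltn_trans.
have kns : k \notin s.
  by apply/negP => ks; have := allP allk k ks; rewrite /ltord ltnn.
rewrite inE => /orP [/eqP -> | iS] sub /=.
  case: (boolP (k \in U)) => kU.
    rewrite wedge_xxZ //; exact: phi_vec.
  rewrite setU11 (@hh_eq s (k |: U) U); last first.
    by move=> x xs; rewrite in_setU1; case: eqP => // ex; rewrite -ex xs in kns.
  rewrite wsign_lt ?escale1 // => a b; rewrite inE => /eqP -> bU.
  have : b \in k :: s by apply: sub.
  rewrite inE => /orP [/eqP eb|bs]; first by rewrite -eb bU in kU.
  exact: (allP allk b bs).
have ik : ltord k i := allP allk i iS.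
have ink : i != k by apply: contraNneq kns => <-.
case: (boolP (k \in U)) => kU.
  set U' := U :\ k.
  have eU : hh s U = hh s U'.
    by apply: hh_eq => x xs; rewrite in_setD1; case: eqP => // ex; rewrite -ex xs in kns.
  have sub' : {subset U' <= s}.
    move=> x; rewrite in_setD1 => /andP [xk xU].
    have : x \in k :: s by apply: sub.
    by rewrite inE (negbTE xk).
  have vi := phi_vec i; have vk := phi_vec k.
  rewrite eU wedge_lanti // IH //.
  have -> : (i \in U') = (i \in U) by rewrite in_setD1 ink.
  rewrite (setU1r _ kU).
  case: (boolP (i \in U)) => iU; first by rewrite wedge0r oppr0.
  rewrite wedgeZr (@hh_eq s (i |: U') (i |: U)); last first.
    move=> x xs; rewrite !in_setU1 in_setD1; case: (eqVneq x k) => [ex|nxk] //.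
    by rewrite -ex xs in kns.
  have -> : wsign R [set i] U = - wsign R [set i] U'.
    rewrite -(setD1K kU) wsignUr; last by rewrite disjoints1 setD11.
    have ik2 : (k < i)%N := ik; by rewrite wsign11 ik2 mulN1r.
  by apply/ffunP => B; rewrite !ffunE; ring.
have sub' : {subset U <= s}.
  move=> x xU; have : x \in k :: s by apply: sub.
  rewrite inE => /orP [/eqP ex|xs]; last by [].
  by rewrite -ex xU in kU.
rewrite IH //; case: ifP => // iU.
by rewrite in_setU1 (negbTE kU) eq_sym (negbTE ink).
Qed.


Definition hhat A : E := hh (enum 'I_n) A.

Lemma enum_sorted : sorted ltord (enum 'I_n).
Proof.
have := iota_ltn_sorted 0 n; rewrite -val_enum_ord sorted_map.
by [].
Qed.

Lemma hL i U : wedge (phi i) (hhat U) =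
    if i \in U then 0 else escale (wsign R [set i] U) (hhat (i |: U)).
Proof. by apply: hhL; [exact: enum_sorted | rewrite mem_enum | move=> x _; rewrite mem_enum]. Qed.

Lemma hh0 s : hh s set0 = eone R n.
Proof. by elim: s => //= k s ->; rewrite inE. Qed.

Lemma hhat0 : hhat set0 = eone R n.
Proof. exact: hh0. Qed.

Lemma hsplit A m : m \in A ->
  hhat A = escale (wsign R [set m] (A :\ m)) (wedge (phi m) (hhat (A :\ m))).
Proof.
move=> mA; rewrite hL setD11 setD1K // escaleA wsign_sq escale1 //.
Qed.

Lemma hmul S T : wedge (hhat S) (hhat T) =
  if [disjoint S & T] then escale (wsign R S T) (hhat (S :|: T)) else 0.
Proof.
have [k] := ubnP #|S|; elim: k S => // k IH S.
rewrite ltnS => Sk.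
case: (set_0Vmem S) => [-> | [m mS]].
  rewrite hhat0 wedge1l -setI_eq0 set0I eqxx set0U wsign0l escale1 //.
set S' := S :\ m.
have eS : S = m |: S' by rewrite setD1K.
have mS' : m \notin S' by rewrite setD11.
have S'k : (#|S'| < k)%N.
  by move: Sk; rewrite [in X in (X <= _)%N](cardsD1 m S) mS.
rewrite (hsplit mS) wedgeZl wedgeA IH //.
have dU (X Y Z : {set 'I_n}) : [disjoint X :|: Y & Z] = [disjoint X & Z] && [disjoint Y & Z].
  by rewrite -!setI_eq0 setIUl setU_eq0.
rewrite [in RHS]eS dU disjoints1.
case: (boolP [disjoint S' & T]) => dS'T; last by rewrite andbF wedge0r escale0.
rewrite andbT wedgeZr hL in_setU (negbTE mS') /=.
case: (boolP (m \in T)) => mT /=; first by rewrite !escale0.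
rewrite !escaleA setUA wsignUl ?disjoints1 // wsignUr //.
congr escale.
set c := wsign R [set m] S'.
transitivity ((c * c) * (wsign R [set m] T * wsign R S' T)); first by ring.
by rewrite wsign_sq mul1r.
Qed.


Lemma sum_delta (I : finType) (i0 : I) (G : I -> R) : \sum_i (i == i0)%:R * G i = G i0.
Proof.
rewrite (bigD1 i0) //= eqxx mul1r [X in _ + X]big1 ?addr0 // => i /negbTE ->.
by rewrite mul0r.
Qed.

Lemma reorder3g (I J K : finType) (f : I -> J -> K -> R) :
  \sum_i \sum_j \sum_k f i j k = \sum_j \sum_k \sum_i f i j k.
Proof.
rewrite exchange_big /=.
by under eq_bigr => j _ do rewrite exchange_big /=.
Qed.

Lemma sum_wcoef2 X A (g : {set 'I_n} -> R) :
  \sum_S wcoef R X S A * g S =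
  if X \subset A then wsign R X (A :\: X) * g (A :\: X) else 0.
Proof.
have key S : ([disjoint X & S] && (X :|: S == A)) = (X \subset A) && (S == A :\: X).
  apply/andP/andP => [[d /eqP <-] | [XA /eqP ->]].
    split; first exact: subsetUl.
    rewrite setDUl setDv set0U; apply/eqP/esym/setDidPl; by rewrite disjoint_sym.
  split; first by rewrite -setI_eq0 setDE setICA setICr setI0.
  by rewrite -{2}(setID A X) (setIidPr XA).
under eq_bigr => S _ do rewrite /wcoef key.
case: (boolP (X \subset A)) => XA /=; last by rewrite big1 // => S _; rewrite mul0r.
rewrite (bigD1 (A :\: X)) //= eqxx [X in _ + X]big1 ?addr0 // => S /negbTE ->.
by rewrite mul0r.
Qed.

Lemma Tmap_eb (w : dform R n) S : Tmap w (ebasis R S) = [ffun T => w (S, T)] :> E.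
Proof.
apply/ffunP => T; rewrite !ffunE (bigD1 S) //= [X in _ + X]big1 ?addr0.
  by rewrite ffunE eqxx mul1r.
by move=> S' /negbTE SS; rewrite ffunE SS mul0r.
Qed.

Lemma Tmap_prod (w e : dform R n) A :
  Tmap (dprod w e) (ebasis R A) =
  \sum_S \sum_S' escale (wcoef R S S' A) (wedge (Tmap w (ebasis R S)) (Tmap e (ebasis R S'))) :> E.
Proof.
apply/ffunP => B; rewrite Tmap_eb !ffunE sum_ffunE; apply: eq_bigr => S _.
rewrite sum_ffunE; apply: eq_bigr => S' _.
rewrite escaleE wedgeE mulr_sumr; apply: eq_bigr => T _.
rewrite mulr_sumr; apply: eq_bigr => T' _.
rewrite !Tmap_eb !ffunE; ring.
Qed.

Lemma wedge_suml (I : finType) (a : I -> R) (x : I -> E) (y : E) :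
  wedge (\sum_i escale (a i) (x i)) y = \sum_i escale (a i) (wedge (x i) y) :> E.
Proof.
rewrite (big_morph (fun u : E => wedge u y : E) (fun u v => wedgeDl u v y) (wedge0l y)).
by apply: eq_bigr => i _; rewrite wedgeZl.
Qed.

Lemma Tmap_hd_eb S : Tmap hd (ebasis R S) = \sum_i escale ((S == [set i])%:R) (phi i) :> E.
Proof.
apply/ffunP => B; rewrite Tmap_eb !ffunE sum_ffunE; apply: eq_bigr => i _.
rewrite escaleE phiE mulr_sumr; apply: eq_bigr => j _ /=.
by case: (_ == _); case: (_ == _); rewrite /= ?mulr0 ?mulr1 ?mul0r ?mul1r.
Qed.

Lemma Tmap_hd_prod (Xf : dform R n) A :
  Tmap (dprod hd Xf) (ebasis R A) =
  \sum_(i in A) escale (wsign R [set i] (A :\ i)) (wedge (phi i) (Tmap Xf (ebasis R (A :\ i)))) :> E.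
Proof.
apply/ffunP => B; rewrite Tmap_prod sum_ffunE.
transitivity (\sum_S \sum_S' \sum_i (S == [set i])%:R *
   (wcoef R S S' A * wedge (phi i) (Tmap Xf (ebasis R S')) B)).
  apply: eq_bigr => S _; rewrite sum_ffunE; apply: eq_bigr => S' _.
  rewrite escaleE Tmap_hd_eb wedge_suml sum_ffunE mulr_sumr; apply: eq_bigr => i _.
  rewrite escaleE; ring.
rewrite reorder3g reorder3g sum_ffunE [RHS]big_mkcond /=; apply: eq_bigr => i _.
under eq_bigr => S _ do rewrite -mulr_sumr.
rewrite sum_delta sum_wcoef2 sub1set.
case: (i \in A) => //.
by rewrite escaleE.
Qed.

Lemma Tdpow p A : Tmap (dpow hd p) (ebasis R A) =
  escale ((#|A| == p)%:R * (p`!)%:R) (hhat A) :> E.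
Proof.
elim: p A => [|p IH] A.
  apply/ffunP => B; rewrite /dpow /= Tmap_eb !ffunE cards_eq0.
  case: (eqVneq A set0) => [->|A0] /=.
    by rewrite hhat0 !ffunE fact0 !mul1r.
  by rewrite !mul0r.
rewrite /dpow iterS -/(dpow hd p) Tmap_hd_prod.
transitivity (\sum_(i in A) escale ((#|A| == p.+1)%:R * (p`!)%:R) (hhat A)).
  apply: eq_bigr => i iA; rewrite IH wedgeZr hL setD11 setD1K //.
  have -> : (#|A :\ i| == p) = (#|A| == p.+1) by rewrite (cardsD1 i A) iA add1n eqSS.
  rewrite !escaleA; congr escale.
  set c := wsign R [set i] (A :\ i).
  transitivity ((c * c) * ((#|A| == p.+1)%:R * (p`!)%:R)); first by ring.
  by rewrite wsign_sq mul1r.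
apply/ffunP => B; rewrite sum_ffunE sumr_const !escaleE.
case: (eqVneq #|A| p.+1) => [->|ne] /=; last by rewrite !mul0r mul0rn.
by rewrite factS natrM -mulr_natr; ring.
Qed.


Lemma Tmap_lin (w : dform R n) (u : E) :
  Tmap w u = \sum_A escale (u A) (Tmap w (ebasis R A)) :> E.
Proof.
apply/ffunP => B; rewrite ffunE sum_ffunE; apply: eq_bigr => A _.
by rewrite escaleE Tmap_eb ffunE.
Qed.

Lemma TmapD (w e : dform R n) (u : E) : Tmap (dadd w e) u = Tmap w u + Tmap e u :> E.
Proof.
apply/ffunP => B; rewrite !ffunE -big_split; apply: eq_bigr => A _ /=.
by rewrite ffunE mulrDr.
Qed.

Lemma Tmap0 (u : E) : Tmap (dzero R n) u = 0 :> E.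
Proof. by apply/ffunP => B; rewrite !ffunE big1 // => A _; rewrite ffunE mulr0. Qed.

Lemma TmapZ a (w : dform R n) (u : E) : Tmap (dscale a w) u = escale a (Tmap w u) :> E.
Proof.
apply/ffunP => B; rewrite !ffunE mulr_sumr; apply: eq_bigr => A _.
by rewrite ffunE mulrCA.
Qed.

Lemma fact_neq0 p : (p`!)%:R != 0 :> R.
Proof. by rewrite pnatr_eq0 -lt0n fact_gt0. Qed.

Lemma Tmap_dexp N A : (n < N)%N -> Tmap (dexp_trunc hd N) (ebasis R A) = hhat A :> E.
Proof.
move=> nN; rewrite /dexp_trunc.
rewrite (big_morph (fun w => Tmap w (ebasis R A) : E) (fun w e => TmapD w e _) (Tmap0 _)).
have hA : (#|A| < N)%N.
  by apply: leq_ltn_trans nN; have := max_card (mem A); rewrite card_ord.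
apply/ffunP => B; rewrite sum_ffunE (bigD1 (Ordinal hA)) //= [X in _ + X]big1 ?addr0.
  by rewrite TmapZ Tdpow !escaleE eqxx mul1r mulrA mulVf ?mul1r // fact_neq0.
move=> p pne; rewrite TmapZ Tdpow !escaleE.
have -> : (#|A| == p) = false.
  apply/negbTE; apply: contra pne => /eqP e; apply/eqP/val_inj => /=; by rewrite e.
by rewrite !mul0r mulr0.
Qed.

End Hat.

Section Fin.
Variables (R : realType) (n : nat).
Notation E := {ffun {set 'I_n} -> R}.
Implicit Types (S T U A B : {set 'I_n}).

Lemma wedge1r (u : E) : wedge u (eone R n) = u.
Proof.
apply/ffunP => A; rewrite wedgeE.
transitivity (\sum_S u S * wcoef R S set0 A).
  apply: eq_bigr => S _; rewrite (bigD1 set0) //= [X in _ + X]big1 ?addr0.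
    by rewrite ffunE eqxx mulr1.
  by move=> T /negbTE T0; rewrite ffunE T0 mulr0 mul0r.
rewrite (bigD1 A) //= [X in _ + X]big1 ?addr0.
  rewrite /wcoef -setI_eq0 setI0 eqxx setU0 eqxx /= wsign_lt ?mulr1 // => a b.
  by rewrite inE.
by move=> S /negbTE SA; rewrite /wcoef setU0 SA andbF mulr0.
Qed.

Lemma wedge_sumr (I : finType) (a : I -> R) (x : I -> E) (y : E) :
  wedge y (\sum_i escale (a i) (x i)) = \sum_i escale (a i) (wedge y (x i)) :> E.
Proof.
rewrite (big_morph (fun u : E => wedge y u : E) (fun u v => wedgeDr y u v) (wedge0r y)).
by apply: eq_bigr => i _; rewrite wedgeZr.
Qed.

Lemma hhat1 (h : 'M[R]_n) i : hhat h [set i] = phi h i.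
Proof.
have := hL h i set0; rewrite inE hhat0 wedge1r setU0 => ->.
by rewrite wsign_lt ?escale1 // => a b _; rewrite inE.
Qed.

Lemma wedge_eb S T : wedge (ebasis R S) (ebasis R T) = [ffun B => wcoef R S T B] :> E.
Proof.
apply/ffunP => B; rewrite wedgeE ffunE (bigD1 S) //= [X in _ + X]big1 ?addr0.
  rewrite (bigD1 T) //= [X in _ + X]big1 ?addr0.
    by rewrite !ffunE !eqxx !mul1r.
  by move=> T' /negbTE TT; rewrite !ffunE TT eqxx mulr0 mul0r.
by move=> S' /negbTE SS; apply: big1 => T' _; rewrite ffunE SS !mul0r.
Qed.

Lemma hhat_g A : hhat (gmetric R n) A = ebasis R A.
Proof.
have [k] := ubnP #|A|; elim: k A => // k IH A.
rewrite ltnS => Ak.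
case: (set_0Vmem A) => [-> | [m mA]]; first by rewrite hhat0.
have Ak' : (#|A :\ m| < k)%N.
  by move: Ak; rewrite [in X in (X <= _)%N](cardsD1 m A) mA.
have phig : phi (gmetric R n) m = ebasis R [set m].
  apply/ffunP => B; rewrite phiE ffunE.
  under eq_bigr => j _ do rewrite /gmetric mxE mulrC.
  rewrite (bigD1 m) //= eqxx mulr1 [X in _ + X]big1 ?addr0 //.
  by move=> j /negbTE jm; rewrite (eq_sym m j) jm mulr0.
rewrite (hsplit _ mA) IH // phig wedge_eb.
apply/ffunP => B; rewrite !ffunE /wcoef disjoints1 setD11 /= setD1K //.
case: (boolP (A == B)) => [/eqP <-|AB]; first by rewrite !eqxx wsign_sq.
by rewrite eq_sym (negbTE AB) mulr0.
Qed.


End Fin.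

Theorem mainTheorem6 (R : realType) (n : nat) (h : 'M[R]_n) :
  (forall N : nat, (n < N)%N ->
     let F := Tmap (dexp_trunc (dform_of_bil h) N) in
     (forall (a : R) (u v : ext R n), F (eadd (escale a u) v) = eadd (escale a (F u)) (F v)) /\
     (forall u v : ext R n, F (wedge u v) = wedge (F u) (F v)) /\
     F (eone R n) = eone R n /\
     (forall v : 'I_n -> R, F (vec v) = vec (hbar h v)))
  /\
  (forall (p : nat) (u : ext R n), homog p u ->
     Tmap (dscale (p`!%:R)^-1 (dpow (dform_of_bil (gmetric R n)) p)) u = u).
Proof.
split.
  move=> N nN F.
  have FE (u : {ffun {set 'I_n} -> R}) :
      F u = \sum_A escale (u A) (hhat h A) :> {ffun {set 'I_n} -> R}.
    rewrite /F Tmap_lin; apply: eq_bigr => A _; by rewrite Tmap_dexp.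
  split; [|split; [|split]].
  - move=> a u v; rewrite /F /Tmap; apply/ffunP => B; rewrite !ffunE.
    rewrite mulr_sumr -big_split /=; apply: eq_bigr => A _; rewrite !ffunE; ring.
  - move=> u v; rewrite !FE wedge_suml.
    under [RHS]eq_bigr => S _ do rewrite wedge_sumr.
    apply/ffunP => B; rewrite !sum_ffunE.
    transitivity (\sum_S \sum_T u S * v T * (\sum_A wcoef R S T A * hhat h A B)).
      transitivity (\sum_A \sum_S \sum_T u S * v T * (wcoef R S T A * hhat h A B)).
        apply: eq_bigr => A _; rewrite escaleE wedgeE big_distrl; apply: eq_bigr => S _.
        rewrite big_distrl; apply: eq_bigr => T _ /=; ring.
      rewrite reorder3g; apply: eq_bigr => S _; apply: eq_bigr => T _.
      by rewrite mulr_sumr.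
    apply: eq_bigr => S _; rewrite escaleE sum_ffunE mulr_sumr; apply: eq_bigr => T _.
    rewrite escaleE hmul sum_wcoef.
    case: ifP => _; last by rewrite ffunE !mulr0.
    rewrite escaleE; ring.
  - by rewrite /F /eone Tmap_dexp // hhat0.
  - move=> v; rewrite FE; apply/ffunP => B; rewrite sum_ffunE.
    transitivity (\sum_i v i * phi h i B).
      under eq_bigr => A _ do rewrite escaleE ffunE big_distrl.
      rewrite exchange_big /=; apply: eq_bigr => i _.
      under eq_bigr => A _ do rewrite -mulrA.
      by rewrite -mulr_sumr sum_delta hhat1.
    rewrite ffunE /hbar.
    under [RHS]eq_bigr => j _ do rewrite big_distrl.
    rewrite [RHS]exchange_big /=; apply: eq_bigr => i _.
    rewrite phiE mulr_sumr; apply: eq_bigr => j _ /=; ring.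
move=> p u hu; apply/ffunP => B.
rewrite TmapZ Tmap_lin escaleE sum_ffunE mulr_sumr.
transitivity (\sum_A (A == B)%:R * u A); last by rewrite sum_delta.
apply: eq_bigr => A _.
rewrite escaleE (Tdpow (gmetric R n)) escaleE hhat_g ffunE.
case: (eqVneq #|A| p) => [e|ne]; last by rewrite hu ?ne //; ring.
rewrite mul1r (eq_sym B A).
transitivity (((p`!)%:R)^-1 * (p`!)%:R * ((A == B)%:R * u A)); first by ring.
by rewrite mulVf ?mul1r // fact_neq0.
Qed.
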